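(* Let $g(X)=X^r+\sum_{i=0}^{r-1}m_iX^i\in\mathbb{F}_2[X]$ have degree $r\ge 1$, and let $f\in\mathbb{F}_2[X]$ with $\deg f<r$ be the initial load of the Galois-mode LFSR with connection polynomial $g$. Let $(a_k)_{k\ge 0}$ be its output sequence, i.e. $a_k$ is the coefficient of $X^{r-1}$ in $X^kf \bmod g$. Then for every $k\ge 0$, \[ \deg\bigl(X^kf \bmod g\bigr)=r-1-\max\{j\ge 0: a_k=a_{k+1}=\dots=a_{k+j-1}=0\}, \] where the maximum is taken to be $0$ if $a_k=1$.
   Context: The Galois-mode LFSR of length $r$ with connection polynomial $g$ has states $(f_0,\dots,f_{r-1})\in\mathbb{F}_2^r$, identified with $f(X)=\sum_{i=0}^{r-1}f_iX^i$, and transition $(f_0,\dots,f_{r-1})\mapsto(m_0f_{r-1},f_0+m_1f_{r-1},\dots,f_{r-2}+m_{r-1}f_{r-1})$; the state after $k$ steps is $X^kf\bmod g$, and the output at step $k$ is the last coordinate $f_{r-1}$ of the current state. Conventions: $\deg(0)=-\infty$, and the maximum of an unbounded set is $+\infty$. *)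

(* Defs.v *)
From HB Require Import structures.
From mathcomp Require Import all_boot all_order all_algebra all_field.
Set Implicit Arguments. Unset Strict Implicit. Unset Printing Implicit Defensive.
Import GRing.Theory.
Local Open Scope ring_scope.

Definition lfsr_state (g f : {poly 'F_2}) (k : nat) : {poly 'F_2} :=
  ('X^k * f) %% g.

Definition lfsr_output (r : nat) (g f : {poly 'F_2}) (k : nat) : 'F_2 :=
  (lfsr_state g f k)`_(r.-1).

Definition zero_run (a : nat -> 'F_2) (k j : nat) : Prop :=
  forall i : nat, (i < j)%N -> a (k + i)%N = 0.

Definition is_max_run (a : nat -> 'F_2) (k M : nat) : Prop :=
  zero_run a k M /\ forall j : nat, zero_run a k j -> (j <= M)%N.

(* Main.v *)
Require Import Defs.
From HB Require Import structures.
From mathcomp Require Import all_boot all_order all_algebra all_field.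
From mathcomp Require Import zify.
Import GRing.Theory.
Local Open Scope ring_scope.

Lemma state_shift (g f : {poly 'F_2}) k i :
  lfsr_state g f (k + i) = ('X^i * lfsr_state g f k) %% g.
Proof. by rewrite /lfsr_state modp_mul exprD mulrA [_ * 'X^i]mulrC. Qed.

Theorem theorem3 (r : nat) (g f : {poly 'F_2}) :
  (0 < r)%N -> g \is monic -> size g = r.+1 -> (size f <= r)%N ->
  forall k : nat,
    (lfsr_state g f k = 0 /\
       forall j : nat, zero_run (lfsr_output r g f) k j)
    \/
    (lfsr_state g f k != 0 /\
       exists M : nat, is_max_run (lfsr_output r g f) k M /\
         ((size (lfsr_state g f k))%:Z - 1 = r%:Z - 1 - M%:Z)%R).
Proof.
move=> r0 mg sg sf k.
have g0 : g != 0 by rewrite -size_poly_eq0 sg.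
set s := lfsr_state g f k.
have ss : (size s <= r)%N by rewrite -ltnS -sg ltn_modp.
have [s0|s0] := eqVneq s 0.
  left; split=> // j i _.
  by rewrite /lfsr_output state_shift -/s s0 mulr0 mod0p coef0.
right; split=> //.
set d := size s.
have d0 : (0 < d)%N by rewrite lt0n size_poly_eq0.
have shift i : (i <= r - d)%N -> lfsr_state g f (k + i) = 'X^i * s.
  move=> hi; rewrite state_shift -/s modp_small // sg mulrC size_mulXn //.
  rewrite -/d; lia.
have out i : (i <= r - d)%N -> lfsr_output r g f (k + i) = s`_(r.-1 - i).
  move=> hi; rewrite /lfsr_output shift // coefXnM.
  have -> : (r.-1 < i)%N = false by lia.
  done.
exists (r - d)%N; split; last first.
  rewrite -/d; have hdr : (d <= r)%N by []. rewrite -(subzn hdr) opprB addrA; lia.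
split.
  move=> i hi; rewrite out; last by lia.
  apply: nth_default; rewrite -/d; lia.
move=> j hj; rewrite leqNgt; apply/negP=> hlt.
have := hj (r - d)%N hlt; rewrite out //.
have -> : (r.-1 - (r - d))%N = d.-1 by lia.
move=> h.
have : lead_coef s != 0 by rewrite lead_coef_eq0.
by rewrite /lead_coef -/d h eqxx.
Qed.
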